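(* Let $D$ be a division algebra and $\sigma\in\mathrm{Aut}(D)$. Let $D(t;\sigma)$ be the division ring of (left) fractions of the skew polynomial ring $D[t;\sigma]$, and let $S$ be the subring of $D(t;\sigma)$ generated by $D$, $t$ and $t^{-1}$. Then $S$ is automorphically normalizable over $D$ if and only if $\sigma$ is of finite inner order.
   Context: All rings are associative with unity. $D[t;\sigma]$ is the skew polynomial ring with $ta=\sigma(a)t$ for $a\in D$; it is an Ore domain, so it has a division ring of fractions. An automorphism $\sigma$ has finite inner order if $\sigma^k$ is an inner automorphism $r\mapsto crc^{-1}$ for some positive integer $k$ and $c\in D^\times$. For a ring $S\supseteq D$, $a\in S$ is automorphic over $D$ with respect to $\tau\in\mathrm{Aut}(D)$ if $ab=\tau(b)a$ for all $b\in D$. Commuting $a_1,\ldots,a_m\in S$ are (left) algebraically independent over $D$ if monomials in them are left linearly independent over $D$. $S$ is automorphically normalizable over $D$ if there exist $m\ge0$ and commuting $a_1,\ldots,a_m\in S$, automorphic over $D$ with respect to pairwise commuting automorphisms, left algebraically independent over $D$, such that $S$ is finitely generated as a left module over the subring $D[a_1,\ldots,a_m]$ generated by $D\cup\{a_1,\ldots,a_m\}$. *)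

(* Defs.v *)
From HB Require Import structures.
From mathcomp Require Import all_boot all_order all_algebra.
Set Implicit Arguments. Unset Strict Implicit. Unset Printing Implicit Defensive.
Import GRing.Theory.
Local Open Scope ring_scope.

Definition is_division_ring (R : unitRingType) : Prop :=
  forall x : R, x != 0 -> x \is a GRing.unit.

Definition is_ring_hom (R S : unitRingType) (f : R -> S) : Prop :=
  [/\ forall x y, f (x + y) = f x + f y,
      forall x y, f (x * y) = f x * f y & f 1 = 1].

Definition is_ring_aut (R : unitRingType) (f : R -> R) : Prop :=
  is_ring_hom f /\ bijective f.

Definition finite_inner_order (D : unitRingType) (sigma : D -> D) : Prop :=
  exists k : nat, (0 < k)%N /\
    exists c : D, c \is a GRing.unit /\
      forall r : D, iter k sigma r = c * r * c^-1.

Definition subring_closed_P (R : unitRingType) (P : R -> Prop) : Prop :=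
  [/\ P 1, forall x y, P x -> P y -> P (x - y) & forall x y, P x -> P y -> P (x * y)].

Definition gen_subring (R : unitRingType) (A : R -> Prop) : R -> Prop :=
  fun x => forall P : R -> Prop, subring_closed_P P -> (forall y, A y -> P y) -> P x.

(* Elements of the image of D[t;sigma] in Q: left D-combinations of powers of t. *)
Definition skew_poly_elt (D Q : unitRingType) (iota : D -> Q) (t : Q) (p : Q) : Prop :=
  exists (n : nat) (c : nat -> D), p = \sum_(i < n) iota (c i) * t ^+ i.

(* (Q, iota, t) is a division ring of left fractions of the skew polynomial ring
   D[t;sigma]: iota : D -> Q is a ring embedding, t iota(a) = iota(sigma a) t,
   the powers of t are left linearly independent over iota(D) (so that the
   subring generated by iota(D) and t is a copy of D[t;sigma]), Q is a division
   ring, and every element of Q is a left fraction p^-1 q of elements of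
   D[t;sigma] with p <> 0. *)
Definition is_skew_frac_field (D Q : unitRingType) (sigma : D -> D)
    (iota : D -> Q) (t : Q) : Prop :=
  [/\ is_division_ring Q,
      is_ring_hom iota,
      forall a : D, t * iota a = iota (sigma a) * t,
      forall (n : nat) (c : nat -> D),
        \sum_(i < n) iota (c i) * t ^+ i = 0 -> forall i, (i < n)%N -> c i = 0
    & forall x : Q, exists p q : Q,
        [/\ skew_poly_elt iota t p, skew_poly_elt iota t q, p != 0 & x = p^-1 * q]].

Definition monomial (Q : unitRingType) (m : nat) (a : 'I_m -> Q)
    (al : {ffun 'I_m -> nat}) : Q :=
  \prod_(i < m) a i ^+ al i.

Definition automorphically_normalizable (D Q : unitRingType) (iota : D -> Q)
    (S : Q -> Prop) : Prop :=
  exists (m : nat) (a : 'I_m -> Q),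
    [/\ (forall i, S (a i)),
        (forall i j, a i * a j = a j * a i),
        (* automorphic w.r.t. pairwise commuting automorphisms *)
        (exists tau : 'I_m -> D -> D,
           [/\ forall i, is_ring_aut (tau i),
               forall i j x, tau i (tau j x) = tau j (tau i x)
             & forall i b, a i * iota b = iota (tau i b) * a i]),
        (* left algebraically independent over D *)
        (forall (s : seq {ffun 'I_m -> nat}) (c : {ffun 'I_m -> nat} -> D),
           uniq s ->
           \sum_(al <- s) iota (c al) * monomial a al = 0 ->
           forall al, al \in s -> c al = 0)
      & (* S finitely generated as a left module over D[a_1,...,a_m] *)
        exists g : seq Q, (forall y, y \in g -> S y) /\
          forall x, S x -> exists r : 'I_(size g) -> Q,
            (forall j, gen_subring (fun y => (exists d, y = iota d) \/ exists i, y = a i) (r j))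
            /\ x = \sum_(j < size g) r j * g`_j].

(* Main.v *)
Require Import Defs.
From HB Require Import structures.
From mathcomp Require Import all_boot all_order all_algebra.
From mathcomp Require Import zify.
From Stdlib Require Import Classical.
Set Implicit Arguments. Unset Strict Implicit. Unset Printing Implicit Defensive.
Import Order.TTheory GRing.Theory Num.Theory.
Local Open Scope ring_scope.

Section Gen.
Variables (R : unitRingType) (A : R -> Prop).

Lemma gen_ind (P : R -> Prop) : subring_closed_P P -> (forall y, A y -> P y) ->
  forall x, gen_subring A x -> P x.
Proof. by move=> hP hA x hx; apply: hx. Qed.

Lemma gen_base y : A y -> gen_subring A y.
Proof. by move=> hy P _ hA; apply: hA. Qed.

Lemma gen_closed : subring_closed_P (gen_subring A).
Proof.
split.
- by move=> P [P1 _ _] _.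
- by move=> x y hx hy P hP hA; case: (hP) => _ PB _; apply: PB; [apply: hx|apply: hy].
- by move=> x y hx hy P hP hA; case: (hP) => _ _ PM; apply: PM; [apply: hx|apply: hy].
Qed.

Lemma gen1 : gen_subring A 1. Proof. by case: gen_closed. Qed.
Lemma genB x y : gen_subring A x -> gen_subring A y -> gen_subring A (x - y).
Proof. by case: gen_closed => _ h _; apply: h. Qed.
Lemma genM x y : gen_subring A x -> gen_subring A y -> gen_subring A (x * y).
Proof. by case: gen_closed => _ _ h; apply: h. Qed.
Lemma gen0 : gen_subring A 0. Proof. by rewrite -(subrr 1); apply: genB; apply: gen1. Qed.
Lemma genN x : gen_subring A x -> gen_subring A (- x).
Proof. by move=> hx; rewrite -sub0r; apply: genB => //; apply: gen0. Qed.
Lemma genD x y : gen_subring A x -> gen_subring A y -> gen_subring A (x + y).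
Proof. by move=> hx hy; rewrite -[y]opprK; apply: genB => //; apply: genN. Qed.
Lemma genX x n : gen_subring A x -> gen_subring A (x ^+ n).
Proof.
move=> hx; elim: n => [|n IH]; first by rewrite expr0; apply: gen1.
by rewrite exprS; apply: genM.
Qed.
End Gen.

Section Basic.
Variables (D Q : unitRingType) (sigma sinv : D -> D) (iota : D -> Q) (t : Q).
Hypothesis HD : is_division_ring D.
Hypothesis Hs : is_ring_hom sigma.
Hypothesis sK : cancel sigma sinv.
Hypothesis sKV : cancel sinv sigma.
Hypothesis Hi : is_ring_hom iota.
Hypothesis Hc : forall a, t * iota a = iota (sigma a) * t.
Hypothesis Hind : forall (n : nat) (c : nat -> D),
  \sum_(i < n) iota (c i) * t ^+ i = 0 -> forall i, (i < n)%N -> c i = 0.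
Hypothesis HQd : is_division_ring Q.

Lemma hom0 (R S : unitRingType) (f : R -> S) : is_ring_hom f -> f 0 = 0.
Proof.
case=> fD _ _; have h := fD 0 0; rewrite addr0 in h.
by apply: (addrI (f 0)); rewrite addr0 -h.
Qed.

Lemma homN (R S : unitRingType) (f : R -> S) : is_ring_hom f -> forall x, f (- x) = - f x.
Proof.
move=> hf x; have [fD _ _] := hf.
by apply/eqP; rewrite -subr_eq0 opprK -fD addNr (hom0 hf).
Qed.

Lemma hom_sum (R S : unitRingType) (f : R -> S) : is_ring_hom f ->
  forall (I : Type) (r : seq I) (P : pred I) (F : I -> R),
  f (\sum_(i <- r | P i) F i) = \sum_(i <- r | P i) f (F i).
Proof.
move=> hf I r P F; have [fD _ _] := hf.
exact: (big_morph f fD (hom0 hf)).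
Qed.

Lemma hom_unit (R S : unitRingType) (f : R -> S) : is_ring_hom f ->
  forall x, x \is a GRing.unit -> f x \is a GRing.unit.
Proof.
case=> _ fM f1 x Ux; apply/unitrP; exists (f x^-1).
by rewrite -!fM mulVr // mulrV // f1.
Qed.

Lemma homV (R S : unitRingType) (f : R -> S) : is_ring_hom f ->
  forall x, x \is a GRing.unit -> f x^-1 = (f x)^-1.
Proof.
move=> hf x Ux; have [_ fM f1] := hf.
apply: (mulrI (hom_unit hf Ux)); by rewrite -fM divrr // mulrV ?f1 // hom_unit.
Qed.

Lemma hom_iter (R : unitRingType) (f : R -> R) n : is_ring_hom f -> is_ring_hom (iter n f).
Proof.
move=> hf; have [fD fM f1] := hf; elim: n => [|n [ID IM I1]]; first by split.
by split => [x y|x y|] /=; rewrite ?ID ?IM ?I1 ?fD ?fM ?f1.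
Qed.

Lemma sinv_hom : is_ring_hom sinv.
Proof.
have [fD fM f1] := Hs; have si := can_inj sK.
split=> [x y|x y|]; apply: si; by rewrite ?fD ?fM ?f1 !sKV.
Qed.

Definition sz (z : int) : D -> D :=
  match z with Posz n => iter n sigma | Negz n => iter n.+1 sinv end.

Lemma sz_hom z : is_ring_hom (sz z).
Proof. case: z => n /=; [exact: hom_iter | exact: (hom_iter n.+1 sinv_hom)]. Qed.

Lemma sz_S w x : sz (w + 1) x = sigma (sz w x).
Proof.
case: w => [n|[|m]].
- by have -> : (Posz n + 1 = Posz n.+1)%R by lia.
- have -> : (Negz 0 + 1 = Posz 0)%R by lia.
  by rewrite /= sKV.
- have -> : (Negz m.+1 + 1 = Negz m)%R by rewrite !NegzE; lia.
  by rewrite /= sKV.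
Qed.

Lemma sz_P w x : sz (w - 1) x = sinv (sz w x).
Proof.
case: w => [[|n]|m].
- by have -> : (Posz 0 - 1 = Negz 0)%R by lia.
- have -> : (Posz n.+1 - 1 = Posz n)%R by lia.
  by rewrite /= sK.
- have -> : (Negz m - 1 = Negz m.+1)%R by rewrite !NegzE; lia.
  by [].
Qed.

Lemma sz_add z w x : sz z (sz w x) = sz (z + w) x.
Proof.
case: z => n; elim: n w => [|n IH] w.
- by rewrite add0r.
- have -> : (Posz n.+1 + w = (Posz n + w) + 1)%R by lia.
  by rewrite sz_S -IH.
- have -> : (Negz 0 + w = w - 1)%R by rewrite NegzE; lia.
  by rewrite sz_P.
- have -> : (Negz n.+1 + w = (Negz n + w) - 1)%R by rewrite !NegzE; lia.
  by rewrite sz_P -IH.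
Qed.

Lemma sz0 x : sz 0 x = x. Proof. by []. Qed.

Lemma sz_bij z : bijective (sz z).
Proof.
exists (sz (- z)) => x; by rewrite sz_add ?addNr ?addrN.
Qed.

Lemma sz_neq0 z x : x != 0 -> sz z x != 0.
Proof.
move=> nx; apply: contra nx => /eqP h; apply/eqP.
apply: (bij_inj (sz_bij z)); by rewrite h (hom0 (sz_hom z)).
Qed.

Lemma iotaD x y : iota (x + y) = iota x + iota y. Proof. by case: Hi. Qed.
Lemma iotaM x y : iota (x * y) = iota x * iota y. Proof. by case: Hi. Qed.
Lemma iota1 : iota 1 = 1. Proof. by case: Hi. Qed.
Lemma iota0 : iota 0 = 0. Proof. exact: hom0. Qed.
Lemma iotaN x : iota (- x) = - iota x. Proof. exact: homN. Qed.

Lemma t_neq0 : t != 0.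
Proof.
apply/eqP => t0.
have h1 : \sum_(i < 2) iota (if (i:nat) == 1%N then 1 else 0) * t ^+ i = 0.
  by rewrite big_ord_recr big_ord_recr big_ord0 /= t0 iota0 iota1 !mul0r mulr0 !add0r.
have := @Hind 2 (fun i => if i == 1%N then 1 else 0) h1 1%N isT.
by rewrite eqxx => /eqP; rewrite oner_eq0.
Qed.

Lemma tU : t \is a GRing.unit.
Proof. exact: HQd t_neq0. Qed.

Lemma tX_iota n b : t ^+ n * iota b = iota (iter n sigma b) * t ^+ n.
Proof.
elim: n b => [|n IH] b; first by rewrite expr0 mulr1 mul1r.
by rewrite exprS -mulrA IH mulrA Hc -mulrA -exprS.
Qed.

Lemma iter_canK n x : iter n sigma (iter n sinv x) = x.
Proof. by elim: n x => [|n IH] x //; by rewrite iterSr iterS sKV IH. Qed.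

Lemma tz_iota z b : t ^ z * iota b = iota (sz z b) * t ^ z.
Proof.
case: z => n /=; first exact: tX_iota.
set w := t ^+ n.+1.
have Uw : w \is a GRing.unit by rewrite unitrX // tU.
have H := tX_iota n.+1 (iter n.+1 sinv b); rewrite iter_canK in H.
rewrite -/w in H.
rewrite -[iota _ * _](mulKr Uw) (mulrA w) H mulrK //.
Qed.

Lemma tzD z w : t ^ (z + w) = t ^ z * t ^ w.
Proof. by rewrite exprzDr // tU. Qed.

Lemma tz_unit z : t ^ z \is a GRing.unit.
Proof.
case: z => n /=; first by rewrite unitrX // tU.
by rewrite unitrV unitrX // tU.
Qed.


Definition LS (s : seq (D * int)) : Q := \sum_(p <- s) iota p.1 * t ^ p.2.
Definition coef (s : seq (D * int)) (z : int) : D := \sum_(p <- s | p.2 == z) p.1.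

Lemma LS_nil : LS [::] = 0. Proof. by rewrite /LS big_nil. Qed.
Lemma LS_cat s1 s2 : LS (s1 ++ s2) = LS s1 + LS s2. Proof. by rewrite /LS big_cat. Qed.
Lemma coef_cat s1 s2 z : coef (s1 ++ s2) z = coef s1 z + coef s2 z.
Proof. by rewrite /coef big_cat. Qed.
Lemma LS1 d z : LS [:: (d, z)] = iota d * t ^ z. Proof. by rewrite /LS big_seq1. Qed.

Lemma LS_opp s : LS (map (fun p => (- p.1, p.2)) s) = - LS s.
Proof.
rewrite /LS big_map -sumrN; apply: eq_bigr => p _ /=; by rewrite iotaN mulNr.
Qed.
Lemma coef_opp s z : coef (map (fun p => (- p.1, p.2)) s) z = - coef s z.
Proof. by rewrite /coef big_map -sumrN. Qed.

Lemma LS_mulr s b : LS s * iota b = LS (map (fun p => (p.1 * sz p.2 b, p.2)) s).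
Proof.
rewrite /LS big_map mulr_suml; apply: eq_bigr => p _ /=.
by rewrite -mulrA tz_iota mulrA iotaM.
Qed.
Lemma LS_mull s b : iota b * LS s = LS (map (fun p => (b * p.1, p.2)) s).
Proof.
rewrite /LS big_map mulr_sumr; apply: eq_bigr => p _ /=; by rewrite mulrA iotaM.
Qed.
Lemma coef_mapr s (f : int -> D) z :
  coef (map (fun p => (p.1 * f p.2, p.2)) s) z = coef s z * f z.
Proof.
rewrite /coef big_map mulr_suml; apply: eq_bigr => p /eqP /= ->; by [].
Qed.
Lemma coef_mapl s b z : coef (map (fun p => (b * p.1, p.2)) s) z = b * coef s z.
Proof. by rewrite /coef big_map mulr_sumr. Qed.

Definition Lmul (s1 s2 : seq (D * int)) :=
  [seq (p.1 * sz p.2 q.1, p.2 + q.2) | p <- s1, q <- s2].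

Lemma LS_mul s1 s2 : LS s1 * LS s2 = LS (Lmul s1 s2).
Proof.
rewrite /LS /Lmul big_allpairs_dep mulr_suml; apply: eq_bigr => p _.
rewrite mulr_sumr; apply: eq_bigr => q _ /=.
by rewrite mulrA -(mulrA _ _ (iota _)) tz_iota mulrA -iotaM -mulrA -tzD.
Qed.

Lemma LS_sum (I : Type) (r : seq I) (M : I -> seq (D * int)) :
  \sum_(i <- r) LS (M i) = LS (flatten (map M r)).
Proof. by rewrite /LS big_flatten big_map. Qed.
Lemma coef_flatten (I : Type) (r : seq I) (M : I -> seq (D * int)) z :
  coef (flatten (map M r)) z = \sum_(i <- r) coef (M i) z.
Proof. by rewrite /coef big_flatten big_map. Qed.

Lemma indep_uniq (zs : seq int) (C : int -> D) : uniq zs ->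
  \sum_(z <- zs) iota (C z) * t ^ z = 0 -> forall z, z \in zs -> C z = 0.
Proof.
move=> uz H0.
set B := (\sum_(z <- zs) `|z|)%N.
have Hb : forall z, z \in zs -> (`|z| <= B)%N.
  move=> z zin; rewrite /B (bigD1_seq z) //=; exact: leq_addr.
set lo : int := - (B%:Z).
set n := (2 * B).+1%N.
set cf := fun i : nat => if (lo + i%:Z) \in zs then C (lo + i%:Z) else 0.
have Hcl : \sum_(z <- zs) iota (C z) * t ^ z
         = (\sum_(i < n) iota (cf i) * t ^+ i) * t ^ lo.
  rewrite mulr_suml.
  have -> : \sum_(i < n) iota (cf i) * t ^+ i * t ^ lo
          = \sum_(i < n | (lo + (i:nat)%:Z) \in zs) iota (C (lo + (i:nat)%:Z)) * t ^ (lo + (i:nat)%:Z).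
    rewrite [RHS]big_mkcond /=; apply: eq_bigr => i _; rewrite /cf.
    case: ifP => _; last by rewrite iota0 !mul0r.
    by rewrite -mulrA -[t ^+ i]/(t ^ (i:nat)%:Z) -tzD addrC.
  rewrite -(big_mkord (fun i => (lo + i%:Z) \in zs) (fun i => iota (C (lo + i%:Z)) * t ^ (lo + i%:Z))).
  rewrite /index_iota subn0.
  rewrite -(big_map (fun i : nat => lo + i%:Z) (fun z => z \in zs) (fun z => iota (C z) * t ^ z)).
  rewrite -big_filter; apply: perm_big.
  apply: uniq_perm => //.
    rewrite filter_uniq // map_inj_uniq ?iota_uniq // => x y /eqP.
    by rewrite (inj_eq (addrI lo)) => /eqP [].

  move=> z; rewrite mem_filter; case zin: (z \in zs); rewrite ?andTb ?andFb //.
  apply/esym/mapP; exists `|z - lo|%N.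
    have := Hb z zin; rewrite mem_iota /n /lo; lia.
  have := Hb z zin; rewrite /lo; lia.
have H1 : \sum_(i < n) iota (cf i) * t ^+ i = 0.
  have := H0; rewrite Hcl => /(congr1 (fun x => x * (t ^ lo)^-1)).
  by rewrite mulrK ?tz_unit // mul0r.
move=> z zin.
have hz := Hb z zin.
have := Hind H1 (i := `|z - lo|%N).
rewrite /cf.
have -> : lo + (`|z - lo|%N)%:Z = z by rewrite /lo; lia.
rewrite zin; apply; rewrite /n /lo; lia.
Qed.

Lemma LS_group s : LS s = \sum_(z <- undup (map snd s)) iota (coef s z) * t ^ z.
Proof.
set zs := undup _.
have -> : \sum_(z <- zs) iota (coef s z) * t ^ z
        = \sum_(z <- zs) \sum_(p <- s) (if p.2 == z then iota p.1 * t ^ p.2 else 0).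
  apply: eq_bigr => z _; rewrite /coef (hom_sum Hi) mulr_suml big_mkcond.
  apply: eq_bigr => p _; case: eqP => [->|_] //; by rewrite mul0r.
rewrite exchange_big /LS [LHS]big_seq_cond [RHS]big_seq_cond; apply: eq_bigr => p /andP [ps _].
have pin : p.2 \in zs by rewrite mem_undup; apply: map_f.
rewrite (bigD1_seq p.2) ?undup_uniq //= eqxx big1 ?addr0 // => z.
by rewrite eq_sym => /negbTE ->.
Qed.

Lemma coef_zero s : LS s = 0 -> forall z, coef s z = 0.
Proof.
move=> H z.
case zin : (z \in undup (map snd s)).
  move: H; rewrite LS_group => H.
  exact: (indep_uniq (C := coef s) (undup_uniq _) H zin).
rewrite /coef big_hasC //; apply/hasPn => p ps; apply/negP => /eqP e.
by move: zin; rewrite mem_undup -e map_f.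
Qed.


Definition Laur (x : Q) := exists s, x = LS s.

Lemma Laur_closed : subring_closed_P Laur.
Proof.
split.
- exists [:: (1, 0)]; by rewrite LS1 iota1 mul1r expr0z.
- move=> x y [s1 ->] [s2 ->]; exists (s1 ++ map (fun p => (- p.1, p.2)) s2).
  by rewrite LS_cat LS_opp.
- move=> x y [s1 ->] [s2 ->]; exists (Lmul s1 s2); by rewrite LS_mul.
Qed.

Lemma sum_single (V : zmodType) (zs : seq int) (F : int -> V) : uniq zs ->
  (forall z1 z2, z1 \in zs -> z2 \in zs -> F z1 != 0 -> F z2 != 0 -> z1 = z2) ->
  (\sum_(z <- zs) F z = 0) \/ exists z0, \sum_(z <- zs) F z = F z0.
Proof.
move=> uz H.
case: (boolP (has (fun z => F z != 0) zs)) => [/hasP [z0 z0in Fz0]|/hasPn Hn].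
  right; exists z0; rewrite (bigD1_seq z0) //= big_seq_cond big1 ?addr0 //.
  move=> z /andP [zin nz]; apply/eqP; apply: contraNT nz => Fz.
  by apply/eqP; apply: H.
left; rewrite big_seq big1 // => z zin; by have := Hn z zin; rewrite negbK => /eqP.
Qed.

Lemma automorphic_form x (tau : D -> D) : Laur x ->
  (forall b, x * iota b = iota (tau b) * x) ->
  finite_inner_order sigma \/ exists d e, x = iota d * t ^ e.
Proof.
move=> [s ->] Hx.
have hc : forall z b, coef s z * sz z b = tau b * coef s z.
  move=> z b; have := Hx b; rewrite LS_mulr LS_mull => /eqP; rewrite -subr_eq0 => /eqP.
  rewrite -LS_opp -LS_cat => /coef_zero /(_ z).
  rewrite coef_cat coef_opp coef_mapl (coef_mapr _ (fun z => sz z b)) => /eqP.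
  by rewrite subr_eq0 => /eqP.
case: (classic (exists z1 z2, (z1 < z2) /\ coef s z1 != 0 /\ coef s z2 != 0)).
  move=> [z1 [z2 [lt12 [n1 n2]]]]; left.
  have U1 := HD n1; have U2 := HD n2.
  exists `|z2 - z1|%N; split; first lia.
  exists ((coef s z2)^-1 * coef s z1); split; first by rewrite unitrMl // unitrV.
  move=> r.
  have -> : iter `|z2 - z1|%N sigma r = sz (z2 - z1) r.
    by have -> : z2 - z1 = Posz `|z2 - z1|%N by lia.
  have e1 := hc z1 (sz (- z1) r); have e2 := hc z2 (sz (- z1) r).
  rewrite sz_add addrN sz0 in e1; rewrite sz_add in e2.
  have -> : sz (z2 + - z1) r = (coef s z2)^-1 * (tau (sz (- z1) r) * coef s z2).
    by rewrite -e2 mulKr.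
  have tb : tau (sz (- z1) r) = coef s z1 * r * (coef s z1)^-1 by rewrite e1 mulrK.
  by rewrite tb invrM ?unitrV // invrK !mulrA.
move=> Hn; right.
rewrite LS_group.
have Hcond : forall z1 z2, z1 \in undup (map snd s) -> z2 \in undup (map snd s) ->
    iota (coef s z1) * t ^ z1 != 0 -> iota (coef s z2) * t ^ z2 != 0 -> z1 = z2.
  move=> z1 z2 _ _ nz1 nz2.
  have c1 : coef s z1 != 0 by apply: contraNneq nz1 => ->; rewrite iota0 mul0r.
  have c2 : coef s z2 != 0 by apply: contraNneq nz2 => ->; rewrite iota0 mul0r.
  case: (ltgtP z1 z2) => // h.
    by exfalso; apply: Hn; exists z1, z2.
  by exfalso; apply: Hn; exists z2, z1.
have [H0|[z0 ->]] := @sum_single Q _ (fun z => iota (coef s z) * t ^ z) (undup_uniq _) Hcond.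
- by exists 0, 0; rewrite H0 iota0 mul0r.
- by exists (coef s z0), z0.
Qed.


Definition SS := gen_subring (fun y : Q => (exists d, y = iota d) \/ y = t \/ y = t^-1).

Lemma S_Laur x : SS x -> Laur x.
Proof.
apply: gen_ind; first exact: Laur_closed.
move=> y [[d ->]|[->|->]].
- by exists [:: (d, 0)]; rewrite LS1 expr0z mulr1.
- by exists [:: (1, 1)]; rewrite LS1 iota1 mul1r expr1z.
- by exists [:: (1, -1)]; rewrite LS1 iota1 mul1r exprN1.
Qed.

Lemma S_iota d : SS (iota d).
Proof. by apply: gen_base; left; exists d. Qed.

Lemma S_tz z : SS (t ^ z).
Proof.
have St : SS t by apply: gen_base; right; left.
have Sti : SS t^-1 by apply: gen_base; right; right.
case: z => n; first exact: genX.
have -> : t ^ (Negz n) = t^-1 ^+ n.+1 by rewrite exprVn.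
exact: genX.
Qed.

Lemma mono0 m (a : 'I_m -> Q) : monomial a [ffun => 0%N] = 1.
Proof. by rewrite /monomial big1 // => i _; rewrite ffunE expr0. Qed.

Lemma mono_delta m (a : 'I_m -> Q) i0 : monomial a [ffun i => (i == i0 : nat)] = a i0.
Proof.
rewrite /monomial (eq_bigr (fun i => if i == i0 then a i else 1)).
  by rewrite -big_mkcond big_pred1_eq.
by move=> i _; rewrite ffunE; case: eqP => _; rewrite ?expr1 ?expr0.
Qed.

Definition indep m (a : 'I_m -> Q) :=
  forall (s : seq {ffun 'I_m -> nat}) (c : {ffun 'I_m -> nat} -> D),
    uniq s -> \sum_(al <- s) iota (c al) * monomial a al = 0 ->
    forall al, al \in s -> c al = 0.

Lemma mono_contra m (a : 'I_m -> Q) (Hai : indep a) al1 al2 y :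
  al1 != al2 -> monomial a al1 = iota y * monomial a al2 -> False.
Proof.
move=> ne H.
have u : uniq [:: al1; al2] by rewrite /= inE ne.
have := @Hai [:: al1; al2] (fun al => if al == al1 then 1 else - y) u.
have ne' : (al2 == al1) = false by apply/negbTE; rewrite eq_sym.
rewrite big_cons big_seq1 eqxx ne'.
rewrite iota1 mul1r iotaN mulNr H subrr => /(_ erefl al1).
rewrite inE eqxx => /(_ isT) /eqP; by rewrite oner_eq0.
Qed.

Lemma form_nz m (a : 'I_m -> Q) (Hai : indep a) i d e :
  a i = iota d * t ^ e -> d != 0 /\ e != 0.
Proof.
move=> Ha; have nd : [ffun j => (j == i : nat)] != [ffun => 0%N].
  apply/negP => /eqP h; have := congr1 (fun f : {ffun _ -> nat} => f i) h.
  by rewrite !ffunE eqxx.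
split.
- apply/eqP => d0; apply: (mono_contra Hai (y := 0) nd).
  by rewrite mono_delta mono0 Ha d0 iota0 !mul0r.
- apply/eqP => e0; apply: (mono_contra Hai (y := d) nd).
  by rewrite mono_delta mono0 Ha e0 expr0z !mulr1.
Qed.

Lemma pow_form d e n : d != 0 -> exists x, x != 0 /\
  (iota d * t ^ e) ^+ n = iota x * t ^ (n%:Z * e).
Proof.
move=> nd; elim: n => [|n [x [nx hx]]].
  by exists 1; rewrite oner_eq0 expr0 mul0r expr0z iota1 mulr1.
exists (d * sz e x); split.
  have Ud := HD nd; have Ux := HD (sz_neq0 e nx).
  apply/negP => /eqP h0.
  have : d * sz e x \is a GRing.unit by rewrite unitrMl.
  by rewrite h0 unitr0.
rewrite exprS hx mulrA -(mulrA (iota d)) tz_iota mulrA -iotaM -mulrA -tzD.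
by congr (_ * t ^ _); rewrite intS mulrDl mul1r.
Qed.


Lemma mulD_neq0 (x y : D) : x != 0 -> y != 0 -> x * y != 0.
Proof.
move=> nx ny; have Ux := HD nx; have Uy := HD ny.
apply/negP => /eqP h0.
have : x * y \is a GRing.unit by rewrite unitrMl.
by rewrite h0 unitr0.
Qed.

Lemma mono_form m (a : 'I_m -> Q) (d : 'I_m -> D) (e : 'I_m -> int) :
  (forall i, d i != 0) -> (forall i, a i = iota (d i) * t ^ e i) ->
  forall al, exists x, x != 0 /\ monomial a al = iota x * t ^ (\sum_i (al i)%:Z * e i).
Proof.
move=> nd Ha al; rewrite /monomial.
apply: (big_rec2 (fun y E => exists x, x != 0 /\ y = iota x * t ^ E)).
  by exists 1; rewrite oner_eq0 iota1 mul1r expr0z.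
move=> i y E _ [x [nx ->]].
have [x' [nx' hx']] := @pow_form (d i) (e i) (al i) (nd i).
rewrite Ha hx'; exists (x' * sz ((al i)%:Z * e i) x); split.
  by apply: mulD_neq0 => //; apply: sz_neq0.
by rewrite mulrA -(mulrA (iota x')) tz_iota mulrA -iotaM -mulrA -tzD.
Qed.

Lemma sign_split (z : int) : z != 0 -> exists n, (0 < n)%N /\ (z = n%:Z \/ z = - n%:Z).
Proof.
case: z => [[|n]|n] // _.
  by exists n.+1; split => //; left.
by exists n.+1; split => //; right; rewrite NegzE.
Qed.

Lemma stepB m (a : 'I_m.+2 -> Q) (Hai : indep a) (d : 'I_m.+2 -> D) (e : 'I_m.+2 -> int) :
  (forall i, a i = iota (d i) * t ^ e i) -> False.
Proof.
move=> Ha.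
have nz i : d i != 0 /\ e i != 0 := form_nz Hai (Ha i).
have nd i : d i != 0 by case: (nz i).
pose i0 : 'I_m.+2 := ord0.
pose i1 : 'I_m.+2 := @Ordinal m.+2 1 isT.
have n01 : (i0 == i1) = false by [].
have n10 : (i1 == i0) = false by [].
pose al (p q : nat) := [ffun i => (p * (i == i0) + q * (i == i1))%N].
have Eal p q : \sum_i ((al p q) i)%:Z * e i = p%:Z * e i0 + q%:Z * e i1.
  rewrite (bigD1 i0) //= (bigD1 i1) //= big1 ?addr0.
    rewrite !ffunE !eqxx n01 n10 /= !muln1 !muln0 addn0 add0n //.
  move=> i /andP [ni0 ni1]; rewrite ffunE (negbTE ni0) (negbTE ni1) !muln0 /=.
  by rewrite mul0r.
have [p [q [p' [q' [npp eqE]]]]] : exists p q p' q', p != p' /\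
    p%:Z * e i0 + q%:Z * e i1 = p'%:Z * e i0 + q'%:Z * e i1.
  have [n0 [n0p s0]] := sign_split (proj2 (nz i0)).
  have [n1 [n1p s1]] := sign_split (proj2 (nz i1)).
  case: s0 => ->; case: s1 => ->.
  - exists n1, 0%N, 0%N, n0; split; [by rewrite -lt0n | nia].
  - exists n1, n0, 0%N, 0%N; split; [by rewrite -lt0n | nia].
  - exists n1, n0, 0%N, 0%N; split; [by rewrite -lt0n | nia].
  - exists n1, 0%N, 0%N, n0; split; [by rewrite -lt0n | nia].
have [x1 [nx1 h1]] := mono_form nd Ha (al p q).
have [x2 [nx2 h2]] := mono_form nd Ha (al p' q').
have ne : al p q != al p' q'.
  apply/negP => /eqP h; have := congr1 (fun f : {ffun _ -> nat} => f i0) h.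
  rewrite !ffunE eqxx n01 !muln1 !muln0 !addn0 => /eqP; by rewrite (negbTE npp).
apply: (mono_contra Hai (y := x1 * x2^-1) ne).
rewrite h1 h2 !Eal eqE mulrA -iotaM divrK //; exact: HD.
Qed.


Lemma stepC (eps : int) (heps : eps = 1 \/ eps = -1) (A' : Q -> Prop)
  (HA' : forall y, A' y -> exists s, y = LS s /\ forall p, p \in s -> 0 <= eps * p.2)
  (g : seq Q) (Hg : forall y, y \in g -> SS y)
  (Hfg : forall x, SS x -> exists r : 'I_(size g) -> Q,
      (forall j, A' (r j)) /\ x = \sum_(j < size g) r j * g`_j) : False.
Proof.
pose Bnd (B : nat) x := exists s, x = LS s /\ forall p, p \in s -> - (B%:Z) <= eps * p.2.
have Bg : forall j : 'I_(size g), exists B, Bnd B g`_j.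
  move=> j; have [s hs] := S_Laur (Hg _ (mem_nth 0 (ltn_ord j))).
  exists (\sum_(p <- s) `|p.2|)%N; exists s; split => // p ps.
  have : (`|p.2| <= \sum_(p <- s) `|p.2|)%N by rewrite (big_rem p) //= leq_addr.
  case: heps => ->; lia.
have [Bf HBf] := fin_all_exists Bg.
pose B := (\sum_j Bf j)%N.
have Bg' : forall j : 'I_(size g), Bnd B g`_j.
  move=> j; have [s [hs hb]] := HBf j; exists s; split => // p ps.
  have : (Bf j <= B)%N by rewrite /B (bigD1 j) //= leq_addr.
  have := hb p ps; lia.
have BA : forall y x, A' y -> Bnd B x -> Bnd B (y * x).
  move=> y x /HA' [s1 [-> h1]] [s2 [-> h2]]; exists (Lmul s1 s2); split; first by rewrite LS_mul.
  move=> p /allpairsP [[p1 p2] [/= p1s p2s ->]] /=.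
  have := h1 _ p1s; have := h2 _ p2s; case: heps => -> /=; lia.
have BD : forall x y, Bnd B x -> Bnd B y -> Bnd B (x + y).
  move=> x y [s1 [-> h1]] [s2 [-> h2]]; exists (s1 ++ s2); split; first by rewrite LS_cat.
  by move=> p; rewrite mem_cat => /orP [] ?; [apply: h1 | apply: h2].
have B0 : Bnd B 0 by exists [::]; split; [rewrite LS_nil|].
set z0 : int := - eps * (B.+1)%:Z.
have [r [Hr Hx]] := Hfg _ (S_tz z0).
have [s [hs hb]] : Bnd B (t ^ z0).
  rewrite Hx; apply: (big_ind (Bnd B)) => // j _; apply: BA => //.
have : LS (s ++ map (fun p => (- p.1, p.2)) [:: (1, z0)]) = 0.
  by rewrite LS_cat LS_opp -hs LS1 iota1 mul1r subrr.
move=> /coef_zero /(_ z0); rewrite coef_cat coef_opp /coef big_cons big_nil /= eqxx addr0.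
rewrite big_hasC ?sub0r.
  by move=> /eqP; rewrite oppr_eq0 oner_eq0.
apply/hasPn => p ps; apply/negP => /eqP e.
have := hb p ps; rewrite e /z0; case: heps => ->; lia.
Qed.


Section Back.
Variables (k : nat) (c : D).
Hypothesis kpos : (0 < k)%N.
Hypothesis Uc : c \is a GRing.unit.
Hypothesis Hk : forall r, iter k sigma r = c * r * c^-1.

Definition u := iota c^-1 * t ^ (k%:Z).
Definition v := iota c * t ^ (- k%:Z).
Definition a := u + v.

Lemma iotaUc : iota c \is a GRing.unit. Proof. exact: hom_unit. Qed.
Lemma iotaUci : iota c^-1 \is a GRing.unit. Proof. by apply: hom_unit; rewrite ?unitrV. Qed.

Lemma sk_ci : iter k sigma c^-1 = c^-1.
Proof. by rewrite Hk mulrV // mul1r. Qed.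
Lemma sk_c : iter k sigma c = c.
Proof. by rewrite Hk mulrK. Qed.

Lemma u_comm b : u * iota b = iota b * u.
Proof.
rewrite /u -mulrA tz_iota /= Hk mulrA -iotaM mulrA mulKr //.
by rewrite iotaM mulrA.
Qed.

Lemma uv : u * v = 1.
Proof.
rewrite /u /v mulrA -(mulrA (iota _)) tz_iota /= sk_c mulrA -iotaM mulVr //.
by rewrite iota1 mul1r -tzD addrN expr0z.
Qed.

Lemma uU : u \is a GRing.unit.
Proof. by rewrite /u unitrMl ?tz_unit // iotaUci. Qed.

Lemma vE : v = u^-1.
Proof. by rewrite -[v](mulKr uU) uv mulr1. Qed.

Lemma vu : v * u = 1.
Proof. by rewrite vE mulVr // uU. Qed.

Lemma v_comm b : v * iota b = iota b * v.
Proof.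
by rewrite -[v * iota b]mulr1 -uv mulrA -(mulrA v) -u_comm mulrA vu mul1r.
Qed.

Lemma a_comm b : a * iota b = iota b * a.
Proof. by rewrite /a mulrDl mulrDr u_comm v_comm. Qed.

Lemma au : a * u = u * a.
Proof. by rewrite /a mulrDl mulrDr vu uv. Qed.

Lemma S_u : SS u.
Proof. by apply: genM; [apply: S_iota | apply: S_tz]. Qed.

Lemma S_a : SS a.
Proof. by apply: genD; [exact: S_u| apply: genM; [apply: S_iota | apply: S_tz]]. Qed.

Definition a2 : seq (D * int) := [:: (c^-1, k%:Z); (c, - k%:Z)].

Lemma aLS : a = LS a2.
Proof. by rewrite /LS big_cons big_seq1. Qed.

Fixpoint Lpow (j : nat) : seq (D * int) :=
  if j is j'.+1 then Lmul (Lpow j') a2 else [:: (1, 0)].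

Lemma Lpow_LS j : a ^+ j = LS (Lpow j).
Proof.
elim: j => [|j IH]; first by rewrite expr0 LS1 iota1 mul1r expr0z.
by rewrite exprSr IH aLS LS_mul.
Qed.

Lemma iter_jk j : iter (j * k) sigma c^-1 = c^-1.
Proof.
rewrite iterM; elim: j => [|j IH] //=.
by rewrite IH sk_ci.
Qed.

Lemma Lpow_prop j : coef (Lpow j) ((j * k)%N%:Z) = c^-1 ^+ j /\
  forall p, p \in Lpow j -> p.2 <= (j * k)%N%:Z.
Proof.
elim: j => [|j [IHc IHb]].
  split; first by rewrite /coef big_cons big_nil mul0n /= addr0 expr0.
  by move=> p; rewrite inE => /eqP ->.
split.
  rewrite /= /coef big_mkcond /Lmul big_allpairs_dep /= big_seq.
  rewrite (eq_bigr (fun p => (if p.2 == (j * k)%N%:Z then p.1 * c^-1 else 0))).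
    rewrite -big_seq -big_mkcond -mulr_suml.
    by move: IHc; rewrite /coef => ->; rewrite exprSr.
  move=> p pin; rewrite big_cons big_seq1 /=.
  have hb := IHb p pin.
  have [z ez] : exists z : int, p.2 = z by exists p.2.
  rewrite ez in hb *.
  have -> : (z + - k%:Z == ((j.+1) * k)%N%:Z) = false.
    by apply/negbTE; apply/negP => /eqP e; move: hb; nia.
  rewrite addr0.
  have -> : (z + k%:Z == ((j.+1) * k)%N%:Z) = (z == (j * k)%N%:Z).
    apply/eqP/eqP; nia.
  case: eqP => // ->; by rewrite /= iter_jk.
move=> p /allpairsP [[p1 q] [/= p1in qin ->]] /=.
have := IHb p1 p1in.
have [z ez] : exists z : int, p1.2 = z by exists p1.2.
rewrite ez; move: qin; rewrite !inE => /orP [] /eqP -> /=; nia.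
Qed.

Lemma indep_a : indep (fun _ : 'I_1 => a).
Proof.
move=> s cf us H0 al als.
apply/eqP; apply: contraT => nz.
pose P := fun n => has (fun al => (cf al != 0) && (al ord0 == n)) s.
have exP : exists n, P n by exists (al ord0); apply/hasP; exists al => //; rewrite nz eqxx.
have ubP : forall n, P n -> (n <= \sum_(al <- s) al ord0)%N.
  move=> n /hasP [al' al's /andP [_ /eqP <-]]; by rewrite (big_rem al') //= leq_addr.
case: (ex_maxnP exP ubP) => J PJ maxJ.
have [als' als's /andP [nz' /eqP eJ]] := hasP PJ.
have Hm : forall al : {ffun 'I_1 -> nat}, monomial (fun _ : 'I_1 => a) al = a ^+ (al ord0).
  by move=> al0; rewrite /monomial big_ord1.
move: H0.
rewrite (eq_bigr (fun al => LS (map (fun p => (cf al * p.1, p.2)) (Lpow (al ord0))))); last first.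
  by move=> al0 _; rewrite Hm Lpow_LS LS_mull.
rewrite LS_sum => /coef_zero /(_ ((J * k)%N%:Z)).
rewrite coef_flatten (bigD1_seq als') //= coef_mapl.
rewrite eJ (proj1 (Lpow_prop J)) big_seq_cond big1 ?addr0.
  have Ucj : c^-1 ^+ J \is a GRing.unit by rewrite unitrX // unitrV.
  move/(congr1 (fun x => x * (c^-1 ^+ J)^-1)); rewrite mulrK // mul0r => h.
  by rewrite h eqxx in nz'.
move=> al' /andP [al's ne]; rewrite coef_mapl.
case: (eqVneq (cf al') 0) => [->|nz'']; first by rewrite mul0r.
have : P (al' ord0) by apply/hasP; exists al' => //; rewrite nz'' eqxx.
move/maxJ => le.
have lt : (al' ord0 < J)%N.
  rewrite ltn_neqAle le andbT; apply: contra ne => /eqP e.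
  by apply/eqP/ffunP => i; rewrite (ord1 i) e eJ.
rewrite /coef big_hasC ?mulr0 //; apply/hasPn => p pin; apply/negP => /eqP ep.
have := (proj2 (Lpow_prop (al' ord0))) p pin.
have [z ez] : exists z : int, p.2 = z by exists p.2.
rewrite ez in ep *; rewrite ep; nia.
Qed.

Lemma fg_a : exists g : seq Q, (forall y, y \in g -> SS y) /\
  forall x, SS x -> exists r : 'I_(size g) -> Q,
    (forall j, gen_subring (fun y => (exists d, y = iota d) \/ exists i : 'I_1, y = a) (r j))
    /\ x = \sum_(j < size g) r j * g`_j.
Proof.
set A' := gen_subring _.
have A'i : forall d, A' (iota d) by move=> d; apply: gen_base; left; exists d.
have A'a : A' a by apply: gen_base; right; exists ord0.
pose g := mkseq (fun r => t ^+ r) k ++ mkseq (fun r => u * t ^+ r) k.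
have memg1 : forall r, (r < k)%N -> t ^+ r \in g.
  by move=> r rk; rewrite mem_cat; apply/orP; left; apply/mapP; exists r; rewrite // mem_iota.
have memg2 : forall r, (r < k)%N -> u * t ^+ r \in g.
  by move=> r rk; rewrite mem_cat; apply/orP; right; apply/mapP; exists r; rewrite // mem_iota.
have memg : forall y, y \in g -> (exists2 r, (r < k)%N & y = t ^+ r) \/ (exists2 r, (r < k)%N & y = u * t ^+ r).
  move=> y; rewrite mem_cat => /orP [] /mapP [r]; rewrite mem_iota /= => rk ->.
    by left; exists r.
  by right; exists r.
exists g; split.
  move=> y /memg [] [r _ ->]; first exact: S_tz r.
  by apply: genM; [exact: S_u | exact: S_tz r].
pose M x := exists r : 'I_(size g) -> Q, (forall j, A' (r j)) /\ x = \sum_j r j * g`_j.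
have M0 : M 0.
  exists (fun _ => 0); split; [move=> _; exact: gen0 | by rewrite big1 // => j _; rewrite mul0r].
have MD : forall x y, M x -> M y -> M (x + y).
  move=> x y [r1 [h1 ->]] [r2 [h2 ->]]; exists (fun j => r1 j + r2 j); split.
    by move=> j; apply: genD; [apply: h1 | apply: h2].
  by rewrite -big_split; apply: eq_bigr => j _; rewrite mulrDl.
have MA : forall y x, A' y -> M x -> M (y * x).
  move=> y x hy [r [h ->]]; exists (fun j => y * r j); split.
    by move=> j; apply: genM; [apply: hy | apply: h].
  by rewrite mulr_sumr; apply: eq_bigr => j _; rewrite mulrA.
have Mg : forall y, y \in g -> M y.
  move=> y yg; pose idx := Ordinal (n := size g) (m := index y g) (etrans (index_mem y g) yg).
  exists (fun j => if j == idx then 1 else 0); split.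
    by move=> j; case: (j == idx); [exact: gen1 | exact: gen0].
  rewrite (bigD1 idx) //= eqxx mul1r big1 ?addr0 ?nth_index //.
  by move=> j /negbTE ->; rewrite mul0r.
have MAg : forall y x, A' y -> x \in g -> M (y * x).
  by move=> y x hy xg; apply: MA => //; apply: Mg.
have tk : t ^+ k = iota c * (u * t ^+ 0).
  by rewrite expr0 mulr1 /u mulrA -iotaM mulrV // iota1 mul1r.
have uu : u * u = a * u - 1 by rewrite /a mulrDl vu addrK.
have gt : forall y, y \in g -> M (y * t).
  move=> y /memg [] [r rk ->].
    rewrite -exprSr; case: (ltnP r.+1 k) => h; first by apply: Mg; apply: memg1.
    have -> : r.+1 = k by apply/eqP; rewrite eqn_leq h rk.
    by rewrite tk; apply: MAg => //; apply: memg2.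
  rewrite -mulrA -exprSr; case: (ltnP r.+1 k) => h; first by apply: Mg; apply: memg2.
  have -> : r.+1 = k by apply/eqP; rewrite eqn_leq h rk.
  rewrite tk expr0 mulr1 mulrA u_comm -mulrA uu.
  have -> : iota c * (a * u - 1) = (iota c * a) * (u * t ^+ 0) + (- iota c) * t ^+ 0.
    by rewrite expr0 !mulr1 mulrBr mulr1 mulrA.
  apply: MD; apply: MAg;
    [apply: genM; [apply: A'i|exact: A'a] | exact: memg2 | apply: genN; apply: A'i | exact: memg1].
have tinv : t^-1 = iota c^-1 * v * t ^+ k.-1.
  rewrite /v mulrA -iotaM mulVr // iota1 mul1r -[t ^+ k.-1]/(t ^ (k.-1)%:Z) -tzD.
  have -> : - k%:Z + (k.-1)%:Z = -1 by lia.
  by rewrite exprN1.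
have av : a - u = v by rewrite /a addrC addKr.
have gti : forall y, y \in g -> M (y * t^-1).
  have km : (k.-1 < k)%N by lia.
  move=> y /memg [] [r rk ->].
    case: r rk => [|r] rk.
      rewrite expr0 mul1r tinv -av mulrBr mulrBl -mulNr -mulNr -(mulrA (- iota c^-1)).
      apply: MD; apply: MAg;
        [apply: genM; [apply: A'i|exact: A'a] | exact: memg1 | apply: genN; apply: A'i | exact: memg2].
    by rewrite exprSr mulrK ?tU //; apply: Mg; apply: memg1; lia.
  case: r rk => [|r] rk.
    rewrite expr0 mulr1 tinv.
    have -> : u * (iota c^-1 * v * t ^+ k.-1) = iota c^-1 * (u * v) * t ^+ k.-1.
      by rewrite (mulrA u) (mulrA u) u_comm -(mulrA (iota c^-1) u v).
    rewrite uv mulr1.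
    by apply: MAg => //; apply: memg1.
  by rewrite exprSr mulrA mulrK ?tU //; apply: Mg; apply: memg2; lia.
have Msum : forall (I : Type) (r : seq I) (F : I -> Q), (forall i, M (F i)) -> M (\sum_(i <- r) F i).
  by move=> I r F hF; apply: big_ind => // i _; apply: hF.
have Mt : forall x, M x -> M (x * t).
  move=> x [r [h ->]]; rewrite mulr_suml; apply: Msum => j; rewrite -mulrA.
  by apply: MA => //; apply: gt; apply: mem_nth.
have Mti : forall x, M x -> M (x * t^-1).
  move=> x [r [h ->]]; rewrite mulr_suml; apply: Msum => j; rewrite -mulrA.
  by apply: MA => //; apply: gti; apply: mem_nth.
have Mtz : forall z, M (t ^ z).
  case=> n.
    elim: n => [|n IH]; first by apply: Mg; apply: memg1.
    by rewrite -[t ^ _]/(t ^+ n.+1) exprSr; apply: Mt.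
  have -> : t ^ (Negz n) = t^-1 ^+ n.+1 by rewrite exprVn.
  elim: n.+1 => [|n' IH]; first by rewrite expr0 -(expr0 t); apply: Mg; apply: memg1.
  by rewrite exprSr; apply: Mti.
move=> x /S_Laur [s ->]; rewrite /LS; apply: Msum => p.
by apply: MA => //; apply: Mtz.
Qed.

End Back.


Lemma pos_closed (eps : int) :
  subring_closed_P (fun y => exists s, y = LS s /\ forall p, p \in s -> 0 <= eps * p.2).
Proof.
split.
- exists [:: (1, 0)]; split; first by rewrite LS1 iota1 mul1r expr0z.
  by move=> p; rewrite inE => /eqP -> /=; rewrite mulr0.
- move=> x y [s1 [-> h1]] [s2 [-> h2]]; exists (s1 ++ map (fun p => (- p.1, p.2)) s2).
  split; first by rewrite LS_cat LS_opp.
  move=> p; rewrite mem_cat => /orP [/h1 //|/mapP [q qin ->] /=]; exact: h2.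
- move=> x y [s1 [-> h1]] [s2 [-> h2]]; exists (Lmul s1 s2); split; first by rewrite LS_mul.
  move=> p /allpairsP [[p1 q] [/= p1in qin ->]] /=.
  by rewrite mulrDr addr_ge0 //; [apply: h1 | apply: h2].
Qed.

Lemma main_iff : automorphically_normalizable iota SS <-> finite_inner_order sigma.
Proof.
split.
  move=> [m [a0 [HaS Hcomm [tau [Htau Htc Hta]] Hai [g [Hg Hfg]]]]].
  apply: NNPP => nfio.
  have form : forall i, exists de : D * int, a0 i = iota de.1 * t ^ de.2.
    move=> i; case: (automorphic_form (S_Laur (HaS i)) (Hta i)) => // [[d [e h]]].
    by exists (d, e).
  have [de Hde] := fin_all_exists form.
  have Hai' : indep a0 := Hai.
  destruct m as [|[|m]].
  - apply: (stepC (eps := 1) _ _ Hg Hfg); first by left.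
    apply: gen_ind; first exact: pos_closed.
    move=> y [[d ->]|[[i ?] _]] //.
    exists [:: (d, 0)]; split; first by rewrite LS1 expr0z mulr1.
    by move=> p; rewrite inE => /eqP -> /=; rewrite mulr0.
  - pose e := (de ord0).2.
    pose eps : int := if 0 < e then 1 else -1.
    apply: (stepC (eps := eps) _ _ Hg Hfg); first by rewrite /eps; case: ifP; [left|right].
    apply: gen_ind; first exact: pos_closed.
    move=> y [[d ->]|[i ->]].
      exists [:: (d, 0)]; split; first by rewrite LS1 expr0z mulr1.
      by move=> p; rewrite inE => /eqP -> /=; rewrite mulr0.
    rewrite (ord1 i) Hde; exists [:: ((de ord0).1, e)]; split; first by rewrite LS1.
    move=> p; rewrite inE => /eqP -> /=; rewrite /eps; case: ifP => h; lia.
  - exact: (stepB Hai' Hde).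
move=> [k [kpos [c [Uc Hk]]]].
exists 1%N, (fun _ => a k c); split.
- by move=> _; apply: S_a.
- by [].
- exists (fun _ => id); split.
  + by move=> _; split; [split | exists id].
  + by [].
  + by move=> _ b; rewrite a_comm.
- exact: indep_a.
- exact: fg_a.
Qed.

End Basic.

Unset Implicit Arguments.

Theorem lemma5p6 (D : unitRingType) (HD : is_division_ring D)
    (sigma : D -> D) (Hsigma : is_ring_aut sigma)
    (Q : unitRingType) (iota : D -> Q) (t : Q)
    (HQ : is_skew_frac_field sigma iota t) :
  automorphically_normalizable iota
    (gen_subring (fun y : Q => (exists d, y = iota d) \/ y = t \/ y = t^-1))
  <-> finite_inner_order sigma.
Proof.
case: Hsigma => Hs [sinv sK sKV].
case: HQ => HQd Hi Hc Hind _.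
exact: (main_iff HD Hs sK sKV Hi Hc Hind HQd).
Qed.
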